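(* Let $\mathcal{S},\mathcal{A}$ be finite, $\gamma\in(0,1)$, and consider an MDP with $(\tilde r(s,a),\tilde s')\sim P(\cdot,\cdot\mid s,a)$, $\tilde r(s,a)\in[0,1]$ almost surely and with bounded density. Let $\rho$ be a coherent risk measure and $d$ a probability distribution on $\mathcal{S}$ with $0<d(s)\le1$. Let $\pi_\theta$ be the softmax policy $\pi_\theta(a\mid s)=\exp(\theta(s,a))/\sum_b\exp(\theta(s,b))$, and define $\mathcal{L}_t(\theta)=\sum_s d(s)\sum_a\pi_\theta(a\mid s)Q^{\pi_{\theta_t}}(s,a)$ and $g_t(\theta_t)=\nabla_\theta\mathcal{L}_t(\theta)|_{\theta=\theta_t}$, where the iterates satisfy $\theta_{t+1}=\theta_t+\eta\,g_t(\theta_t)$ with $\eta\le(1-\gamma)/5$. Then $g_t(\theta_t)\to0$ as $t\to\infty$.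
   Context: A coherent risk measure $\rho$ satisfies concavity, monotonicity ($\tilde x\le\tilde y\Rightarrow\rho(\tilde x)\le\rho(\tilde y)$), translation invariance $\rho(\tilde x+c)=\rho(\tilde x)+c$, and positive homogeneity $\rho(\lambda\tilde x)=\lambda\rho(\tilde x)$ for $\lambda\ge0$. For a stochastic policy $\pi$, $Q^\pi$ is the unique fixed point of $(\mathcal{T}^\pi Q)(s,a)=\rho\big(\tilde r(s,a)+\gamma\sum_{a'}\pi(a'\mid\tilde s')Q(\tilde s',a')\big)$, $\rho$ taken over the joint law of $(\tilde r(s,a),\tilde s')$. *)

(* Defs.v *)
From HB Require Import structures.
From mathcomp Require Import all_boot all_order all_algebra.
From mathcomp Require Import all_classical all_reals all_analysis.
Set Implicit Arguments. Unset Strict Implicit. Unset Printing Implicit Defensive.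
Import Order.TTheory GRing.Theory Num.Theory.
Local Open Scope classical_set_scope.
Local Open Scope ring_scope.

Section Defs.
Context (R : realType) (dO : measure_display) (Omega : measurableType dO)
        (Pr : probability Omega R).

Definition Linf (X : Omega -> R) : Prop :=
  measurable_fun setT X /\ exists M : R, {ae Pr, forall w, `|X w| <= M}.

Definition coherent (rho : (Omega -> R) -> R) : Prop :=
  [/\ (forall (X Y : Omega -> R) (l : R), Linf X -> Linf Y -> 0 <= l <= 1 ->
         l * rho X + (1 - l) * rho Y <= rho (fun w => l * X w + (1 - l) * Y w)),
      (forall X Y : Omega -> R, Linf X -> Linf Y -> (forall w, X w <= Y w) ->
         rho X <= rho Y),
      (forall (X : Omega -> R) (c : R), Linf X -> rho (fun w => X w + c) = rho X + c) &
      (forall (X : Omega -> R) (l : R), Linf X -> 0 <= l ->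
         rho (fun w => l * X w) = l * rho X)].

Definition law_invariant (rho : (Omega -> R) -> R) : Prop :=
  forall X Y : Omega -> R, Linf X -> Linf Y ->
    (forall B : set R, measurable B -> Pr (X @^-1` B) = Pr (Y @^-1` B)) ->
    rho X = rho Y.
End Defs.

Section MDP.
Context (R : realType) (dO : measure_display) (Omega : measurableType dO)
        (S A : finType).

Definition bellman (rho : (Omega -> R) -> R) (gamma : R)
  (r : S -> A -> Omega -> R) (s' : S -> A -> Omega -> S)
  (pi : S -> A -> R) (Q : S -> A -> R) (s : S) (a : A) : R :=
  rho (fun w => r s a w + gamma * \sum_(a' : A) pi (s' s a w) a' * Q (s' s a w) a').

Definition softmax (theta : S -> A -> R) (s : S) (a : A) : R :=
  expR (theta s a) / \sum_(b : A) expR (theta s b).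

Definition surrogate (d : S -> R) (Qt : S -> A -> R) (theta : S -> A -> R) : R :=
  \sum_(s : S) d s * \sum_(a : A) softmax theta s a * Qt s a.

Definition shift (theta : S -> A -> R) (s : S) (a : A) (h : R) : S -> A -> R :=
  fun s1 a1 => if (s1 == s) && (a1 == a) then theta s1 a1 + h else theta s1 a1.

Definition grad (f : (S -> A -> R) -> R) (theta : S -> A -> R) (s : S) (a : A) : R :=
  derive1 (fun h : R => f (shift theta s a h)) 0.
End MDP.

(* Main.v *)
Require Import Defs.
From HB Require Import structures.
From mathcomp Require Import all_boot all_order all_algebra.
From mathcomp Require Import all_classical all_reals all_analysis.
From mathcomp Require Import ring lra.
Import Order.TTheory GRing.Theory Num.Theory.
Local Open Scope classical_set_scope.
Local Open Scope ring_scope.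


Section Calc.
Context (R : realType).

Lemma is_derive_sumT (I : finType) (F : I -> R -> R) (x : R) (dF : I -> R) :
  (forall i, is_derive x 1 (F i) (dF i)) ->
  is_derive x 1 (fun h => \sum_i F i h) (\sum_i dF i).
Proof.
move=> H.
have : is_derive x 1 (\sum_i F i) (\sum_i dF i).
  by elim/big_ind2 : _ => // [|] *; [exact: is_derive_cst|exact: is_deriveD].
by rewrite fct_sumE.
Qed.

Lemma is_derive_cst' (c x : R) : is_derive x 1 (fun _ : R => c) 0.
Proof. exact: is_derive_cst. Qed.

Lemma is_derive_shift (c : bool) (t x : R) :
  is_derive x 1 (fun h : R => if c then t + h else t) (c%:R).
Proof.
case: c => /=.
  have H : is_derive x 1 (cst t + id) (0 + 1) by apply: is_deriveD.
  by rewrite add0r in H.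
exact: is_derive_cst.
Qed.

Lemma is_derive_expRc (g : R -> R) (x dg : R) : is_derive x 1 g dg ->
  is_derive x 1 (fun h => expR (g h)) (expR (g x) * dg).
Proof.
move=> H. have := @is_derive1_comp R expR g x _ _ (is_derive_expR (g x)) H.
by [].
Qed.

Lemma is_derive_Mc (f g : R -> R) (x df dg : R) : is_derive x 1 f df -> is_derive x 1 g dg ->
  is_derive x 1 (fun h => f h * g h) (f x * dg + g x * df).
Proof. move=> Hf Hg. have := is_deriveM Hf Hg. by []. Qed.

Lemma is_derive_Vc (f : R -> R) (x df : R) : f x != 0 -> is_derive x 1 f df ->
  is_derive x 1 (fun h => (f h)^-1) (- (f x) ^- 2 * df).
Proof. move=> H1 H2. have := is_deriveV H1 H2. by []. Qed.


Arguments is_derive_expRc [g x dg].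
Arguments is_derive_Mc [f g x df dg].
Arguments is_derive_Vc [f x df].
Arguments is_derive_sumT [I F x dF].

Lemma sumexp_gt0 (A : finType) (a0 : A) (f : A -> R) : 0 < \sum_b expR (f b).
Proof.
rewrite (bigD1 a0) //=; apply: ltr_pwDl; first exact: expR_gt0.
by apply: sumr_ge0 => b _; exact: expR_ge0.
Qed.

Lemma grad_formula (S A : finType) (d : S -> R) (Q : S -> A -> R) (th : S -> A -> R) s a :
  grad (surrogate d Q) th s a =
  d s * softmax th s a * (Q s a - \sum_b softmax th s b * Q s b).
Proof.
rewrite /grad /surrogate.
pose E := fun (s1 : S) (a1 : A) (h : R) => expR (@Defs.shift R S A th s a h s1 a1).
have hE : forall s1 a1, is_derive (0:R) (1:R) (E s1 a1)
   (expR (th s1 a1) * ((s1 == s) && (a1 == a))%:R).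
  move=> s1 a1; rewrite /E /Defs.shift.
  have := is_derive_expRc (is_derive_shift ((s1 == s) && (a1 == a)) (th s1 a1) 0).
  by case: ((s1 == s) && (a1 == a)); rewrite ?addr0.
pose N := fun (s1 : S) (h : R) => \sum_a1 E s1 a1 h * Q s1 a1.
pose Z := fun (s1 : S) (h : R) => \sum_a1 E s1 a1 h.
have hN : forall s1, is_derive (0:R) (1:R) (N s1)
   (\sum_a1 expR (th s1 a1) * ((s1 == s) && (a1 == a))%:R * Q s1 a1).
  move=> s1; apply: is_derive_sumT => a1.
  have := is_derive_Mc (hE s1 a1) (is_derive_cst' (Q s1 a1) 0).
  by rewrite mulr0 add0r mulrC.
have hZ : forall s1, is_derive (0:R) (1:R) (Z s1)
   (\sum_a1 expR (th s1 a1) * ((s1 == s) && (a1 == a))%:R).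
  by move=> s1; apply: is_derive_sumT => a1; exact: hE.
have Z0 : forall s1, Z s1 0 = \sum_a1 expR (th s1 a1).
  by move=> s1; apply: eq_bigr => a1 _; rewrite /E /Defs.shift; case: ifP; rewrite ?addr0.
have N0 : forall s1, N s1 0 = \sum_a1 expR (th s1 a1) * Q s1 a1.
  by move=> s1; apply: eq_bigr => a1 _; rewrite /E /Defs.shift; case: ifP; rewrite ?addr0.
have Zpos : forall s1, 0 < Z s1 0 by move=> s1; rewrite Z0; exact: (@sumexp_gt0 A a (th s1)).
have hF : forall s1, is_derive (0:R) (1:R) (fun h => d s1 * (N s1 h * (Z s1 h)^-1))
   (d s1 * (N s1 0 * (- (Z s1 0) ^- 2 * 
        (\sum_a1 expR (th s1 a1) * ((s1 == s) && (a1 == a))%:R))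
      + (Z s1 0)^-1 * (\sum_a1 expR (th s1 a1) * ((s1 == s) && (a1 == a))%:R * Q s1 a1))).
  move=> s1.
  have := is_derive_Mc (is_derive_cst' (d s1) 0)
     (is_derive_Mc (hN s1) (is_derive_Vc (lt0r_neq0 (Zpos s1)) (hZ s1))).
  by rewrite mulr0 addr0.
have -> : (fun h => \sum_s1 d s1 * \sum_a1 softmax (Defs.shift th s a h) s1 a1 * Q s1 a1)
   = (fun h => \sum_s1 d s1 * (N s1 h * (Z s1 h)^-1)).
  apply/funext => h; apply: eq_bigr => s1 _; congr (_ * _).
  rewrite /N /Z /softmax mulr_suml; apply: eq_bigr => a1 _.
  by rewrite /E; rewrite mulrAC.
have HH := is_derive_sumT hF.
rewrite derive1E; move: HH => [_ ->].
rewrite (bigD1 s) //= [X in _ + X]big1 ?addr0; last first.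
  move=> s1 /negPf H; rewrite !big1 => [|a1 _|a1 _]; rewrite ?H /= ?mulr0 ?mul0r ?addr0 ?mulr0 //.


have e1 : \sum_a1 expR (th s a1) * ((s == s) && (a1 == a))%:R = expR (th s a).
  rewrite (bigD1 a) //= !eqxx mulr1 big1 ?addr0 // => a1 /negPf H.
  by rewrite H andbF mulr0.
have e2 : \sum_a1 expR (th s a1) * ((s == s) && (a1 == a))%:R * Q s a1
   = expR (th s a) * Q s a.
  rewrite (bigD1 a) //= !eqxx mulr1 big1 ?addr0 // => a1 /negPf H.
  by rewrite H andbF mulr0 mul0r.
rewrite e1 e2.
rewrite N0; move: (Zpos s); rewrite Z0 => Zp.
have e3 : \sum_b softmax th s b * Q s b
   = (\sum_b expR (th s b) * Q s b) / (\sum_a1 expR (th s a1)).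
  by rewrite mulr_suml; apply: eq_bigr => b _; rewrite /softmax mulrAC.
rewrite e3 /softmax.
move: Zp.
set z := \sum_a1 expR (th s a1).
set n := \sum_a1 expR (th s a1) * Q s a1.
move=> Zp; have nz : z != 0 by rewrite lt0r_neq0.
by field.
Qed.

End Calc.


Section Risk.
Context (R : realType) (dO : measure_display) (Omega : measurableType dO)
        (Pr : probability Omega R).

Lemma meas_fin (S : finType) (s0 : Omega -> S) (F : S -> R) :
  (forall x, measurable (s0 @^-1` [set x])) ->
  measurable_fun setT (fun w => F (s0 w)).
Proof.
move=> hs.
have -> : (fun w => F (s0 w)) = (fun w => \sum_(x : S) (F x * \1_(s0 @^-1` [set x]) w)).
  apply/funext => w; rewrite (bigD1 (s0 w)) //= big1 ?addr0.
    by rewrite indicE mem_set // mulr1.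
  move=> x hx; rewrite indicE memNset ?mulr0 //.
  by move=> /= e; rewrite e eqxx in hx.
apply: measurable_sum => x.
have := measurable_realfun.measurable_funM (measurable_cst (F x)) (@measurable_realfun.measurable_indic _ _ R setT _ (hs x)).
by [].
Qed.

Lemma Linf_cst (c : R) : Linf Pr (fun _ => c).
Proof.
split; first exact: measurable_cst.
by exists `|c|; apply: nearW => w.
Qed.

Lemma Linf_add_fin (S : finType) (X : Omega -> R) (s0 : Omega -> S) (F : S -> R) :
  Linf Pr X -> (forall x, measurable (s0 @^-1` [set x])) ->
  Linf Pr (fun w => X w + F (s0 w)).
Proof.
move=> [mX [M hM]] hs; split.
  have := measurable_realfun.measurable_funD mX (@meas_fin _ _ F hs); by [].
exists (M + \sum_x `|F x|); apply: filterS hM => w hw.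
apply: (le_trans (ler_normD _ _)); apply: lerD => //.
rewrite (bigD1 (s0 w)) //=; apply: ler_wpDr => //.
by apply: sumr_ge0 => x _.
Qed.

Variable rho : (Omega -> R) -> R.
Hypothesis hrho : coherent Pr rho.

Lemma rho_cst (c : R) : rho (fun _ => c) = c.
Proof.
case: hrho => _ _ htr hhom.
have h0 : rho (fun _ => 0) = 0.
  have := hhom (fun _ => 0) 0 (Linf_cst 0) (lexx 0).
  by rewrite !mul0r.
have := htr (fun _ => 0) c (Linf_cst 0).
by rewrite h0 !add0r.
Qed.

Lemma rho_mono (X Y : Omega -> R) : Linf Pr X -> Linf Pr Y ->
  (forall w, X w <= Y w) -> rho X <= rho Y.
Proof. by case: hrho => _ hm _ _; exact: hm. Qed.

Lemma rho_trans (X : Omega -> R) c : Linf Pr X -> rho (fun w => X w + c) = rho X + c.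
Proof. by case: hrho => _ _ ht _; exact: ht. Qed.

Hypothesis hlaw : law_invariant Pr rho.

Lemma rho_r01 (X : Omega -> R) : measurable_fun setT X ->
  {ae Pr, forall w, 0 <= X w <= 1} -> 0 <= rho X <= 1.
Proof.
move=> mX hX.
have LX : Linf Pr X.
  split => //; exists 1; apply: filterS hX => w /andP[h0 h1].
  by rewrite ger0_norm.
pose Y := fun w => Num.max 0 (Num.min (X w) 1).
have mY : measurable_fun setT Y.
  have := measurable_realfun.measurable_maxr (measurable_cst (0:R)) (measurable_realfun.measurable_minr mX (measurable_cst (1:R))).
  by [].
have Y01 : forall w, 0 <= Y w <= 1.
  move=> w; rewrite /Y; apply/andP; split; first by rewrite le_max lexx.
  by rewrite ge_max ler01 ge_min lexx orbT.
have LY : Linf Pr Y.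
  split => //; exists 1; apply: nearW => w; have /andP[h0 h1] := Y01 w.
  by rewrite ger0_norm.
have -> : rho X = rho Y.
  apply: hlaw => // B mB.
  case: hX => N [mN N0 hN].
  have mXB : measurable (X @^-1` B) by rewrite -[X @^-1` B]setTI; exact: mX.
  have mYB : measurable (Y @^-1` B) by rewrite -[Y @^-1` B]setTI; exact: mY.
  have E : forall E, measurable E -> Pr E = Pr (E `\` N).
    move=> E mE; rewrite (measureDI Pr mE mN).
    by rewrite (subset_measure0 (measurableI _ _ mE mN) mN (@subIsetr _ E N)) // adde0.
  rewrite (E _ mXB) (E _ mYB); congr (Pr _).
  apply/seteqP; split => w [hB hnN]; split => //=.
  - have hw : 0 <= X w <= 1.
      by apply: contra_notP hnN => hw; apply: hN.
    move: hB; rewrite /Y /=; case/andP: hw => h0 h1.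
    by rewrite (min_l h1) (max_r h0).
  - have hw : 0 <= X w <= 1.
      by apply: contra_notP hnN => hw; apply: hN.
    move: hB; rewrite /Y /=; case/andP: hw => h0 h1.
    by rewrite (min_l h1) (max_r h0).
apply/andP; split.
  rewrite -(rho_cst 0); apply: rho_mono => //; first exact: Linf_cst.
  by move=> w; case/andP: (Y01 w).
rewrite -(rho_cst 1); apply: rho_mono => //; first exact: Linf_cst.
by move=> w; case/andP: (Y01 w).
Qed.

End Risk.

Section Asc.
Context (R : realType).

Lemma key_ineq (y x : R) : 0 <= y * x -> -1/5 <= y -> 4/5 * y * x <= (expR y - 1) * x.
Proof.
move=> hyx hy.
have h1 := expR_ge1Dx y.
have h2 := expR_ge1Dx (- y).
have h3 := expRxMexpNx_1 y.
have h4 := expR_gt0 y.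
have h5 := expR_gt0 (- y).
set e := expR y in h1 h3 h4 *; set e' := expR (- y) in h2 h3 h5 *.
have [x0|x0] := leP 0 x.
  have [y0|y0] := leP 0 y; first by nra.
  have : y * x <= 0 by nra.
  move=> h; have yx0 : y * x = 0 by lra.
  have : x = 0 by nra. by move=> ->; lra.
have y0 : y <= 0 by nra.
have hel : e * (1 - y) <= 1 by nra.
nra.
Qed.


Lemma sumexp_gt0' (A : finType) (a0 : A) (f : A -> R) : 0 < \sum_b expR (f b).
Proof.
rewrite (bigD1 a0) //=; apply: ltr_pwDl; first exact: expR_gt0.
by apply: sumr_ge0 => b _; exact: expR_ge0.
Qed.

Lemma ascent (A : finType) (th th' q : A -> R) (c eta D : R) (a0 : A) (E E' f : R) :
  E = \sum_b expR (th b) -> E' = \sum_b expR (th' b) ->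
  f = \sum_b expR (th b) / E * q b ->
  0 < c <= 1 -> 0 < eta -> eta * D <= 1/5 -> (forall a, 0 <= q a <= D) ->
  (forall a, th' a = th a + eta * (c * (expR (th a) / E) * (q a - f))) ->
  4/5 * eta / expR 1 * (c * (expR (th a0) / E) * (q a0 - f)) ^+ 2
  <= \sum_a expR (th' a) / E' * q a - f.
Proof.
move=> hE hE' hf /andP[c0 c1] eta0 etaD hq hth'.
have E0 : 0 < E by rewrite hE; exact: (@sumexp_gt0' A a0 th).
have E'0 : 0 < E' by rewrite hE'; exact: (@sumexp_gt0' A a0 th').
pose p a := expR (th a) / E.
have p0 a : 0 <= p a by rewrite /p; apply: divr_ge0; [exact: expR_ge0 | exact: ltW].
have p1 : \sum_a p a = 1 by rewrite /p -mulr_suml -hE divff // lt0r_neq0.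
have pl1 a : p a <= 1.
  rewrite -p1 (bigD1 a) //= lerDl; exact: sumr_ge0.
have f0 : 0 <= f.
  rewrite hf; apply: sumr_ge0 => a _; apply: mulr_ge0; first exact: (p0 a).
  by case/andP: (hq a).
have fD : f <= D.
  rewrite hf; have -> : D = \sum_a p a * D by rewrite -mulr_suml p1 mul1r.
  apply: ler_sum => a _; apply: ler_wpM2l; first exact: (p0 a).
  by case/andP: (hq a).
pose x a := q a - f.
have xD a : - D <= x a <= D.
  rewrite /x; case/andP: (hq a) => h1 h2. apply/andP; split; lra.
pose y a := eta * (c * p a * x a).
have hy a : th' a = th a + y a by rewrite hth'.
have ee a : expR (th' a) = expR (th a) * expR (y a) by rewrite hy expRD.
have yx0 a : 0 <= y a * x a.
  rewrite /y -!mulrA; apply: mulr_ge0; first lra.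
  apply: mulr_ge0; first lra.
  rewrite mulrA; apply: mulr_ge0; [exact: (p0 a) | rewrite -expr2; exact: sqr_ge0].
have yb a : -1/5 <= y a <= 1/5.
  have := xD a; have := p0 a; have := pl1 a; rewrite /y.
  move=> h1 h2 /andP[h3 h4].
  have hcp0 : 0 <= c * p a by apply: mulr_ge0 => //; lra.
  have hcp1 : c * p a <= 1 by rewrite -[1]mulr1; apply: ler_pM => //; lra.
  have : `|c * p a * x a| <= D.
    rewrite normrM ger0_norm //; rewrite -[D]mul1r; apply: ler_pM => //.
    by rewrite ler_norml h3 h4.
  rewrite ler_norml => /andP[h5 h6].
  apply/andP; split; nra.
have sx : \sum_a expR (th a) * x a = 0.
  rewrite /x; under eq_bigr do rewrite mulrBr.
  rewrite sumrB -mulr_suml -hE hf mulr_sumr; apply/eqP; rewrite subr_eq0; apply/eqP; apply: eq_bigr => a _.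
  by field; rewrite lt0r_neq0.
pose N := \sum_a expR (th a) * (expR (y a) - 1) * x a.
have L : \sum_a expR (th' a) / E' * q a - f = N / E'.
  have h1 : \sum_a expR (th' a) * x a = N.
    have -> : \sum_a expR (th' a) * x a = \sum_a (expR (th a) * (expR (y a) - 1) * x a + expR (th a) * x a).
      by apply: eq_bigr => a _; rewrite ee; ring.
    by rewrite big_split /= sx addr0.
  rewrite -h1 /x; under [X in _ = X / _]eq_bigr do rewrite mulrBr.
  rewrite sumrB -mulr_suml -hE' mulrBl mulr_suml.
  congr (_ - _); first by apply: eq_bigr => a _; rewrite mulrAC.
  by field; rewrite lt0r_neq0.
rewrite L.
have term a : 4/5 * expR (th a) * (y a * x a) <= expR (th a) * (expR (y a) - 1) * x a.
  have := @key_ineq (y a) (x a) (yx0 a) (proj1 (andP (yb a))).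
  have := expR_gt0 (th a). move=> h1 h2. nra.
have Nge : 4/5 * expR (th a0) * (y a0 * x a0) <= N.
  rewrite /N (bigD1 a0) //=; apply: le_trans (term a0) _; rewrite lerDl; apply: sumr_ge0 => a _.
  apply: le_trans (term a); apply: mulr_ge0; last exact: yx0 a.
  apply: mulr_ge0; [lra | exact: expR_ge0].
have N0 : 0 <= N.
  apply: le_trans Nge; apply: mulr_ge0; last exact: yx0 a0.
  apply: mulr_ge0; [lra | exact: expR_ge0].
have E'le : E' <= E * expR 1.
  rewrite hE' hE mulr_suml; apply: ler_sum => a _; rewrite ee.
  apply: ler_wpM2l; first exact: expR_ge0.
  rewrite ler_expR; case/andP: (yb a) => _ h; lra.
have e1 : 0 < expR (1 : R) := expR_gt0 1.
have step1 : N / (E * expR 1) <= N / E'.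
  apply: ler_wpM2l => //; rewrite lef_pV2 ?posrE //; apply: mulr_gt0 => //.
apply: le_trans step1.
have step2 : 4/5 * expR (th a0) * (y a0 * x a0) / (E * expR 1) <= N / (E * expR 1).
  by apply: ler_wpM2r => //; rewrite invr_ge0; apply: mulr_ge0 => //; lra.
apply: le_trans step2.
have -> : expR (th a0) = p a0 * E by rewrite /p mulrAC -mulrA divff ?mulr1 // lt0r_neq0.
have eq1 : 4/5 * (p a0 * E) * (y a0 * x a0) / (E * expR 1)
   = 4/5 * eta / expR 1 * (c * (p a0 * x a0) ^+ 2).
  by rewrite /y; field; apply/andP; split; rewrite lt0r_neq0.
rewrite eq1.
have eq2 : (c * (p a0 * E / E) * (q a0 - f)) ^+ 2 = c ^+ 2 * (p a0 * x a0) ^+ 2.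
  by rewrite /x; field; rewrite lt0r_neq0.
rewrite eq2.
have hPX : 0 <= (p a0 * x a0) ^+ 2 by exact: sqr_ge0.
move: hPX; generalize ((p a0 * x a0) ^+ 2) => Z hZ.
apply: ler_wpM2l; first by apply: mulr_ge0 => //; apply: mulr_ge0; lra.
apply: ler_wpM2r => //; rewrite expr2; nra.
Qed.

End Asc.

Lemma fin_argmax (R : realType) (I : finType) (i0 : I) (F : I -> R) :
  exists i, forall j, F j <= F i.
Proof.
case: (@arg_maxP _ R I i0 xpredT F isT) => i _ H; exists i => j; exact: H.
Qed.

Lemma fin_argmin (R : realType) (I : finType) (i0 : I) (F : I -> R) :
  exists i, forall j, F i <= F j.
Proof.
case: (@arg_minP _ R I i0 xpredT F isT) => i _ H; exists i => j; exact: H.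
Qed.

Lemma softmax_ge0 (R : realType) (S A : finType) (th : S -> A -> R) s a :
  0 <= softmax th s a.
Proof.
rewrite /softmax; apply: divr_ge0; first exact: expR_ge0.
by apply: sumr_ge0 => b _; exact: expR_ge0.
Qed.

Lemma softmax_sum1 (R : realType) (S A : finType) (a0 : A) (th : S -> A -> R) s :
  \sum_a softmax th s a = 1.
Proof.
rewrite /softmax -mulr_suml divff //; apply: lt0r_neq0.
exact: (@sumexp_gt0 R A a0 (th s)).
Qed.

Section MDP.
Context (R : realType) (dO : measure_display) (Omega : measurableType dO)
  (Pr : probability Omega R) (S A : finType) (gamma : R) (hgamma : 0 < gamma < 1)
  (r : S -> A -> Omega -> R) (s' : S -> A -> Omega -> S)
  (hr_meas : forall s a, measurable_fun setT (r s a))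
  (hs'_meas : forall s a x, measurable (s' s a @^-1` [set x]))
  (hr01 : forall s a, {ae Pr, forall w, 0 <= r s a w <= 1})
  (rho : (Omega -> R) -> R) (hrho : coherent Pr rho) (hlaw : law_invariant Pr rho).

Lemma Linf_r s a : Linf Pr (r s a).
Proof.
split; first exact: hr_meas.
exists 1; apply: filterS (hr01 s a) => w /andP[h0 h1]; by rewrite ger0_norm.
Qed.

Lemma Linf_bell (pi Q : S -> A -> R) s a :
  Linf Pr (fun w => r s a w + gamma * \sum_a' pi (s' s a w) a' * Q (s' s a w) a').
Proof.
exact: (@Linf_add_fin R dO Omega Pr S (r s a) (s' s a)
  (fun y => gamma * \sum_a' pi y a' * Q y a') (Linf_r s a) (hs'_meas s a)).
Qed.

Lemma bell_le (pi1 Q1 pi2 Q2 : S -> A -> R) s a :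
  (forall y, \sum_a' pi1 y a' * Q1 y a' <= \sum_a' pi2 y a' * Q2 y a') ->
  bellman rho gamma r s' pi1 Q1 s a <= bellman rho gamma r s' pi2 Q2 s a.
Proof.
move=> H; rewrite /bellman; apply: (@rho_mono R dO Omega Pr rho hrho).
- exact: Linf_bell.
- exact: Linf_bell.
move=> w; rewrite lerD2l; apply: ler_wpM2l; last exact: H.
by case/andP: hgamma => h _; exact: ltW.
Qed.

Lemma bell_shift (pi Q : S -> A -> R) (c : R) s a :
  (forall y, \sum_a' pi y a' = 1) ->
  bellman rho gamma r s' pi (fun s1 a1 => Q s1 a1 + c) s a
  = bellman rho gamma r s' pi Q s a + gamma * c.
Proof.
move=> H; rewrite /bellman /=.
have -> : (fun w => r s a w + gamma * \sum_a' pi (s' s a w) a' * (Q (s' s a w) a' + c))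
  = (fun w => (r s a w + gamma * \sum_a' pi (s' s a w) a' * Q (s' s a w) a') + gamma * c).
  apply/funext => w; under eq_bigr do rewrite mulrDr.
  rewrite big_split /= -mulr_suml H mul1r; ring.
exact: (@rho_trans R dO Omega Pr rho hrho _ _ (Linf_bell pi Q s a)).
Qed.

Lemma rho_r s a : 0 <= rho (r s a) <= 1.
Proof. exact: (@rho_r01 R dO Omega Pr rho hrho hlaw (r s a) (hr_meas s a) (hr01 s a)). Qed.

Lemma bell_bounds (pi Q : S -> A -> R) (m M : R) s a :
  (forall y b, 0 <= pi y b) -> (forall y, \sum_a' pi y a' = 1) ->
  (forall s1 a1, m <= Q s1 a1 <= M) ->
  gamma * m <= bellman rho gamma r s' pi Q s a <= 1 + gamma * M.
Proof.
move=> hp hs hQ.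
have hg : 0 <= gamma by case/andP: hgamma => h _; exact: ltW.
have Lc : forall c, Linf Pr (fun w => r s a w + c).
  move=> c; have := @Linf_add_fin R dO Omega Pr S (r s a) (s' s a) (fun _ => c)
    (Linf_r s a) (hs'_meas s a); by [].
have := rho_r s a => /andP[r0 r1].
apply/andP; split.
- apply: (@le_trans _ _ (rho (fun w => r s a w + gamma * m))).
    rewrite (@rho_trans R dO Omega Pr rho hrho _ _ (Linf_r s a)); lra.
  rewrite /bellman; apply: (@rho_mono R dO Omega Pr rho hrho) => //; first exact: Linf_bell.
  move=> w; rewrite lerD2l; apply: ler_wpM2l => //.
  rewrite -[m]mul1r -(hs (s' s a w)) mulr_suml; apply: ler_sum => b _.
  by apply: ler_wpM2l => //; case/andP: (hQ (s' s a w) b).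
- apply: (@le_trans _ _ (rho (fun w => r s a w + gamma * M))); last first.
    rewrite (@rho_trans R dO Omega Pr rho hrho _ _ (Linf_r s a)); lra.
  rewrite /bellman; apply: (@rho_mono R dO Omega Pr rho hrho) => //; first exact: Linf_bell.
  move=> w; rewrite lerD2l; apply: ler_wpM2l => //.
  rewrite -[M]mul1r -(hs (s' s a w)) mulr_suml; apply: ler_sum => b _.
  by apply: ler_wpM2l => //; case/andP: (hQ (s' s a w) b).
Qed.

Lemma Q_bounds (pi Q : S -> A -> R) (s0 : S) (a0 : A) :
  (forall y b, 0 <= pi y b) -> (forall y, \sum_a' pi y a' = 1) ->
  (forall s a, Q s a = bellman rho gamma r s' pi Q s a) ->
  forall s a, 0 <= Q s a /\ Q s a * (1 - gamma) <= 1.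
Proof.
move=> hp hs hQ.
have [iM HM] := @fin_argmax R _ (s0, a0) (fun i : S * A => Q i.1 i.2).
have [im Hm] := @fin_argmin R _ (s0, a0) (fun i : S * A => Q i.1 i.2).
have hb : forall s1 a1, Q im.1 im.2 <= Q s1 a1 <= Q iM.1 iM.2.
  by move=> s1 a1; rewrite (Hm (s1, a1)) (HM (s1, a1)).
have := @bell_bounds pi Q _ _ iM.1 iM.2 hp hs hb; rewrite -hQ => /andP[_ h1].
have := @bell_bounds pi Q _ _ im.1 im.2 hp hs hb; rewrite -hQ => /andP[h2 _].
move=> s a; have /andP[h3 h4] := hb s a.
case/andP: hgamma => g0 g1.
split; nra.
Qed.

Lemma improve (pi pi' Q Q' : S -> A -> R) (s0 : S) (a0 : A) :
  (forall y b, 0 <= pi' y b) -> (forall y, \sum_a' pi' y a' = 1) ->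
  (forall s a, Q s a = bellman rho gamma r s' pi Q s a) ->
  (forall s a, Q' s a = bellman rho gamma r s' pi' Q' s a) ->
  (forall y, \sum_a' pi y a' * Q y a' <= \sum_a' pi' y a' * Q y a') ->
  forall s a, Q s a <= Q' s a.
Proof.
move=> hp hs hQ hQ' himp.
have [i Hi] := @fin_argmin R _ (s0, a0) (fun i : S * A => Q' i.1 i.2 - Q i.1 i.2).
set del := Q' i.1 i.2 - Q i.1 i.2.
have key : forall s a, Q s a + gamma * del <= Q' s a.
  move=> s a.
  have e1 : bellman rho gamma r s' pi' (fun s1 a1 => Q s1 a1 + del) s a <= Q' s a.
    rewrite [X in _ <= X]hQ'; apply: bell_le => y; apply: ler_sum => b _.
    apply: ler_wpM2l => //; have := Hi (y, b); rewrite /= -/del; lra.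
  rewrite bell_shift // in e1.
  have e2 : Q s a <= bellman rho gamma r s' pi' Q s a.
    by rewrite [X in X <= _]hQ; apply: bell_le.
  lra.
have := key i.1 i.2; rewrite -/del => h.
case/andP: hgamma => g0 g1.
have hdel : del = Q' i.1 i.2 - Q i.1 i.2 by [].
have d0 : 0 <= del by nra.
move=> s a; have := Hi (s, a); rewrite /= -/del; lra.
Qed.

End MDP.

Theorem lemma5 (R : realType) (dO : measure_display) (Omega : measurableType dO)
  (Pr : probability Omega R) (S A : finType)
  (gamma : R) (hgamma : 0 < gamma < 1)
  (r : S -> A -> Omega -> R) (s' : S -> A -> Omega -> S)
  (hr_meas : forall s a, measurable_fun setT (r s a))
  (hs'_meas : forall s a x, measurable (s' s a @^-1` [set x]))
  (hr01 : forall s a, {ae Pr, forall w, 0 <= r s a w <= 1})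
  (hdens : forall s a, exists M : R, forall x : S, exists f : R -> R,
      measurable_fun setT f /\ (forall u, 0 <= f u <= M) /\
      forall B : set R, measurable B ->
        Pr (r s a @^-1` B `&` s' s a @^-1` [set x])
        = (\int[lebesgue_measure]_(u in B) (f u)%:E)%E)
  (rho : (Omega -> R) -> R) (hrho : coherent Pr rho) (hlaw : law_invariant Pr rho)
  (d : S -> R) (hd : forall s, 0 < d s <= 1) (hd1 : \sum_(s : S) d s = 1)
  (Qpi : (S -> A -> R) -> S -> A -> R)
  (hQ : forall theta s a,
      Qpi theta s a = bellman rho gamma r s' (softmax theta) (Qpi theta) s a)
  (eta : R) (heta : 0 < eta <= (1 - gamma) / 5)
  (theta : nat -> S -> A -> R)
  (hiter : forall t s a, theta t.+1 s a =
      theta t s a + eta * grad (surrogate d (Qpi (theta t))) (theta t) s a) :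
  forall s a,
    (fun t => grad (surrogate d (Qpi (theta t))) (theta t) s a) @ \oo --> 0.
Proof.
move=> s a.
have [g0 g1] : 0 < gamma /\ gamma < 1 by case/andP: hgamma.
have [eta0 etab] : 0 < eta /\ eta <= (1 - gamma) / 5 by case/andP: heta.
pose pi t := softmax (theta t).
pose Q t := Qpi (theta t).
have hpi0 : forall t y b, 0 <= pi t y b by move=> t y b; exact: softmax_ge0.
have hpi1 : forall t y, \sum_a' pi t y a' = 1 by move=> t y; exact: (@softmax_sum1 R S A a (theta t) y).
have hQfix : forall t s1 a1, Q t s1 a1 = bellman rho gamma r s' (pi t) (Q t) s1 a1.
  by move=> t; exact: hQ.
pose D := 1 / (1 - gamma).
have hQb : forall t s1 a1, 0 <= Q t s1 a1 <= D.
  move=> t s1 a1.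
  have [h1 h2] := @Q_bounds R dO Omega Pr S A gamma hgamma r s' hr_meas hs'_meas hr01
     rho hrho hlaw (pi t) (Q t) s a (hpi0 t) (hpi1 t) (hQfix t) s1 a1.
  by apply/andP; split => //; rewrite /D ler_pdivlMr ?subr_gt0.
have hetaD : eta * D <= 1/5.
  rewrite /D mulrA mulr1 ler_pdivrMr ?subr_gt0 //; lra.
pose V t s1 := \sum_a1 pi t s1 a1 * Q t s1 a1.
pose W t s1 := \sum_a1 pi t.+1 s1 a1 * Q t s1 a1.
pose gr t s1 a1 := grad (surrogate d (Qpi (theta t))) (theta t) s1 a1.
pose kap : R := 4/5 * eta / expR 1.
have kap0 : 0 < kap.
  rewrite /kap; apply: divr_gt0; last exact: expR_gt0.
  apply: mulr_gt0 => //; lra.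
have asc : forall t s1 a1, kap * (gr t s1 a1) ^+ 2 <= W t s1 - V t s1.
  move=> t s1 a1; rewrite /gr grad_formula.
  apply: (@ascent R A (theta t s1) (theta t.+1 s1) (Q t s1) (d s1) eta D a1 _ _ _
     erefl erefl erefl) => //.
  by move=> a2; rewrite hiter grad_formula.
have Wge : forall t s1, V t s1 <= W t s1.
  move=> t s1; have := asc t s1 a; have := sqr_ge0 (gr t s1 a).
  move=> h1 h2; nra.
have mono : forall t s1 a1, Q t s1 a1 <= Q t.+1 s1 a1.
  move=> t; exact: (@improve R dO Omega Pr S A gamma hgamma r s' hr_meas hs'_meas hr01
     rho hrho (pi t) (pi t.+1) (Q t) (Q t.+1) s a (hpi0 t.+1) (hpi1 t.+1)
     (hQfix t) (hQfix t.+1) (Wge t)).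
have VW : forall t s1, W t s1 <= V t.+1 s1.
  move=> t s1; apply: ler_sum => b _; apply: ler_wpM2l; [exact: hpi0 | exact: mono].
pose J t := \sum_s1 d s1 * V t s1.
have d0 : forall s1, 0 <= d s1 by move=> s1; case/andP: (hd s1) => h _; exact: ltW.
have term : forall t s1, d s1 * kap * (gr t s1 a) ^+ 2 <= d s1 * V t.+1 s1 - d s1 * V t s1.
  move=> t s1; rewrite -mulrBr -mulrA; apply: ler_wpM2l => //.
  apply: le_trans (asc t s1 a) _; rewrite lerD2r; exact: VW.
have termge : forall t s1, 0 <= d s1 * kap * (gr t s1 a) ^+ 2.
  move=> t s1; apply: mulr_ge0; [apply: mulr_ge0 => //; exact: ltW | exact: sqr_ge0].
have Jinc : forall t, d s * kap * (gr t s a) ^+ 2 <= J t.+1 - J t.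
  move=> t; rewrite /J -sumrB (bigD1 s) //=; apply: le_trans (term t s) _.
  rewrite lerDl; apply: sumr_ge0 => s1 _; exact: le_trans (termge t s1) (term t s1).
have Jnd : {homo J : n m / (n <= m)%N >-> n <= m}.
  apply/nondecreasing_seqP => t; have := Jinc t; have := termge t s; lra.
have VD : forall t s1, V t s1 <= D.
  move=> t s1; rewrite /V -[D]mul1r -(hpi1 t s1) mulr_suml; apply: ler_sum => b _.
  by apply: ler_wpM2l; [exact: hpi0 | case/andP: (hQb t s1 b)].
have Jub : has_ubound (range J).
  exists D => _ [t _ <-]; rewrite /J -[D]mul1r -hd1 mulr_suml; apply: ler_sum => s1 _.
  by apply: ler_wpM2l.
have Jcvg := nondecreasing_is_cvgn Jnd Jub.
have h1 : (fun t => J t.+1) @ \oo --> limn J.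
  by have := Jcvg; rewrite -(cvg_shiftS J).
have Hdiff : (fun t => J t.+1 - J t) @ \oo --> 0.
  have := cvgB h1 Jcvg; rewrite subrr => H; exact: H.
apply/cvgrPdist_lt => e e0.
have c0 : 0 < d s * kap * e ^+ 2.
  apply: mulr_gt0; last exact: exprn_gt0.
  by apply: mulr_gt0 => //; case/andP: (hd s).
move/cvgrPdist_lt: Hdiff => /(_ _ c0); apply: filterS => t ht.
rewrite sub0r normrN in ht; rewrite sub0r normrN.
have h2 := ler_norm (J t.+1 - J t).
have h3 := Jinc t.
have h4 : d s * kap * (gr t s a) ^+ 2 < d s * kap * e ^+ 2 by lra.
have dk : 0 < d s * kap by apply: mulr_gt0 => //; case/andP: (hd s).
rewrite ltr_pM2l // in h4.
change (`|gr t s a| < e).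
rewrite ltr_norml; apply/andP; split; rewrite !expr2 in h4; nra.
Qed.
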